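(* Let $I:\mathbb{N}\to\mathbb{N}$ be an increasing function. There exists an online minimization problem $P$ with at most $I(n)$ inputs of length $n$ such that some randomized algorithm without advice is $1$-competitive for $P$, while every deterministic $P$-algorithm with advice needs to read at least $\Omega(\log\log I(n))$ bits of advice (on inputs of length $n$) to achieve a constant competitive ratio.
   Context: Online algorithms with advice read bits from an infinite advice tape prepared by an oracle knowing the whole input; advice complexity is the maximum number of bits read on inputs of length at most $n$. A randomized algorithm is a probability distribution over deterministic algorithms. An algorithm $R$ is $c$-competitive if there is a constant $\alpha$ with $\mathbb{E}[R(\sigma)]\leq c\,\mathrm{OPT}(\sigma)+\alpha$ for all inputs $\sigma$. *)

(* Defs.v *)
From HB Require Import structures.
From mathcomp Require Import all_boot all_order all_algebra.
From mathcomp Require Import all_classical all_reals all_analysis measurable_realfun.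
Unset Strict Implicit. Unset Printing Implicit Defensive.
Import Order.TTheory GRing.Theory Num.Theory.
Local Open Scope classical_set_scope.
Local Open Scope ring_scope.

(* An online minimization problem: requests of type [req], answers of type
   [ans], a set of admissible inputs (request sequences) and a nonnegative,
   possibly infinite (= infeasible) cost of an answer sequence on an input. *)
Record online_min_problem (R : realType) := OnlineMinProblem {
  req : Type;
  ans : Type;
  is_input : seq req -> Prop;
  cost : seq req -> seq ans -> \bar R;
  cost_ge0 : forall s y, (0 <= cost s y)%E
}.
Arguments req {R} P : rename.
Arguments ans {R} P : rename.
Arguments is_input {R} P s : rename.
Arguments cost {R} P s y : rename.

Definition OPT {R : realType} (P : online_min_problem R) (s : seq (req P)) : \bar R :=
  ereal_inf [set cost P s y | y in [set y : seq (ans P) | size y = size s]].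

(* A deterministic online algorithm: the answer to the last request of a
   prefix, computed from that prefix only. *)
Definition det_alg (X Y : Type) := seq X -> Y.

Definition run {X Y : Type} (A : det_alg X Y) (s : seq X) : seq Y :=
  [seq A (take i.+1 s) | i <- iota 0 (size s)].

Definition tape := nat -> bool.

(* A deterministic online algorithm with advice is given by
   [A phi p]     : answer to the last request of prefix p with tape phi,
   [reads phi p] : number of advice bits (a prefix of the tape) read
                   by the end of processing prefix p.
   Well-formedness: bits are read in order, never "unread", and everything
   done up to prefix p (including how many bits are read) depends only on
   the bits read so far. *)
Definition advice_alg_wf {X Y : Type} (A : tape -> seq X -> Y)
    (reads : tape -> seq X -> nat) : Prop :=
  (forall phi (s : seq X) i, reads phi (take i s) <= reads phi s)%N /\
  (forall phi phi' (p : seq X),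
      (forall k, (k < reads phi p)%N -> phi k = phi' k) ->
      reads phi' p = reads phi p /\ A phi' p = A phi p).

Definition advice_competitive {R : realType} (P : online_min_problem R)
    (A : tape -> seq (req P) -> ans P) (reads : tape -> seq (req P) -> nat)
    (c : R) (b : nat -> nat) : Prop :=
  exists alpha : R, forall s, is_input P s ->
    exists phi : tape,
      (cost P s (run (A phi) s) <= c%:E * OPT P s + alpha%:E)%E /\
      (forall n, (size s <= n)%N -> (reads phi s <= b n)%N).

(* A randomized algorithm: a probability distribution over deterministic
   algorithms, presented as a random variable [Ra] on a probability space. *)
Definition rand_competitive {R : realType} (P : online_min_problem R)
    {d : measure_display} {T : measurableType d} (Pr : probability T R)
    (Ra : T -> det_alg (req P) (ans P)) (c : R) : Prop :=
  (forall s, is_input P s ->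
     measurable_fun setT (fun w => cost P s (run (Ra w) s))) /\
  exists alpha : R, forall s, is_input P s ->
    (\int[Pr]_w cost P s (run (Ra w) s) <= c%:E * OPT P s + alpha%:E)%E.

Definition at_most_inputs {R : realType} (P : online_min_problem R)
    (I : nat -> nat) : Prop :=
  forall n, exists f : 'I_(I n) -> seq (req P),
    forall s, is_input P s -> size s = n -> exists i, f i = s.

(* Main.v *)
Require Import Defs.
From HB Require Import structures.
From mathcomp Require Import all_boot all_order all_algebra.
From mathcomp Require Import all_classical all_reals all_analysis measurable_realfun.
From mathcomp Require Import lra.
Import Order.TTheory GRing.Theory Num.Theory.
Local Open Scope ring_scope.
Local Open Scope classical_set_scope.

Definition tt (I : nat -> nat) (n : nat) : nat :=
  \max_(k < (I n).+1 | (k ^ (2 * k) <= I n)%N) k.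
Lemma tt_max I n k : (k ^ (2 * k) <= I n)%N -> (k <= tt I n)%N.
Proof.
move=> H.
have kI : (k < (I n).+1)%N.
  rewrite ltnS; apply: leq_trans H; case: k => // k.
  by rewrite -[X in (X <= _)%N]expn1 leq_pexp2l // muln_gt0.
exact: (@leq_bigmax_cond _ (fun k : 'I_(I n).+1 => (k ^ (2 * k) <= I n)%N) (fun k => val k) (Ordinal kI)).
Qed.

Lemma tt_ok I n : (1 <= I n)%N -> (tt I n ^ (2 * tt I n) <= I n)%N.
Proof.
move=> H.
have := @eq_bigmax_cond _ [pred k : 'I_(I n).+1 | (k ^ (2 * k) <= I n)%N] (fun k => val k).
case.
  by apply/card_gt0P; exists ord0; rewrite inE /= expn0.
by move=> k; rewrite inE /= => Hk; rewrite /tt => ->.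
Qed.

Lemma tt_gt I n : (I n < (tt I n).+1 ^ (2 * (tt I n).+1))%N.
Proof.
rewrite ltnNge; apply/negP => /tt_max; by rewrite ltnn.
Qed.

Definition NN I n := (tt I n ^ 2)%N.
Definition codes I n : seq (seq nat) :=
  [seq map val (tval x) | x <- enum {: (tt I n).-tuple 'I_(NN I n)}].
Definition cells I (s : seq nat) : seq nat := nth [::] (codes I (size s)) (nth 0%N s 1).
Definition cellset {R : realType} (N j : nat) : set R :=
  `[j%:R / N%:R, j.+1%:R / N%:R]%classic.
Definition bad {R : realType} I (s : seq nat) : set R :=
  ~` `[0, 1]%classic `|` \big[setU/set0]_(j <- cells I s) cellset (NN I (size s)) j.
Definition pcost {R : realType} I (s : seq nat) (y : seq R) : \bar R :=
  ((tt I (size s))%:R * \1_(bad I s) (head 0 y))%:E.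
Lemma pcost_ge0 {R : realType} I s y : (0 <= @pcost R I s y)%E.
Proof. by rewrite lee_fin mulr_ge0. Qed.
Definition is_inp I (s : seq nat) : Prop := exists c, (c < I (size s))%N /\
  (2 <= size s)%N /\ s = 0%N :: c :: nseq (size s - 2) 0%N.
Definition Prob (R : realType) (I : nat -> nat) : online_min_problem R :=
  @OnlineMinProblem R nat R (is_inp I) (@pcost R I) (@pcost_ge0 R I).

Lemma amI R I : at_most_inputs (Prob R I) I.
Proof.
move=> n; exists (fun i : 'I_(I n) => 0%N :: val i :: nseq (n - 2) 0%N).
move=> s [c [cI [s2 E]]] sz; subst n; exists (Ordinal cI); exact: esym E.
Qed.

Lemma meas_bad R I s : measurable (@bad R I s).
Proof.
apply: measurableU; first by apply: measurableC; exact: measurable_itv.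
by apply: bigsetU_measurable => j _; exact: measurable_itv.
Qed.
Definition Pr (R : realType) := uniform_prob (@ltr01 R).

Lemma Pr_itv (R : realType) (a b : R) : a <= b -> (Pr R `[a, b] <= (b - a)%:E)%E.
Proof.
move=> ab.
rewrite /Pr /uniform_prob.
apply: (@le_trans _ _ (\int[lebesgue_measure]_(x in `[a, b]) (cst 1%:E x))%E).
  apply: ge0_le_integral => //.
  - by move=> x _; rewrite lee_fin uniform_pdf_ge0.
  - apply/measurable_EFinP; apply: measurable_funTS; exact: measurable_uniform_pdf.
  - by move=> x _; rewrite /uniform_pdf lee_fin subr0 invr1; case: ifP.
rewrite integral_cst //= mul1e lebesgue_measure_itv /= lte_fin.
by case: ltP => // _; rewrite lee_fin subr_ge0.
Qed.

Lemma Pr_out (R : realType) : Pr R (~` `[0, 1]) = 0.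
Proof.
rewrite /Pr /uniform_prob integral_uniform_pdf setICl.
exact: integral_set0.
Qed.

Lemma Pr_cell (R : realType) (N j : nat) : (0 < N)%N -> (Pr R (cellset N j) <= (N%:R^-1)%:E)%E.
Proof.
move=> N0; rewrite /cellset.
have H : (j%:R / N%:R : R) <= j.+1%:R / N%:R.
  by rewrite ler_pM2r ?invr_gt0 ?ltr0n // ler_nat.
have := @Pr_itv R _ _ H.
by rewrite -mulrBl -natrB // subSnn mul1r.
Qed.

Lemma Pr_big (R : realType) (N : nat) (l : seq nat) : (0 < N)%N ->
  (Pr R (\big[setU/set0]_(j <- l) cellset N j) <= ((size l)%:R / N%:R)%:E)%E.
Proof.
move=> N0; elim: l => [|j l IH].
  by rewrite big_nil /Pr /uniform_prob integral_set0 mul0r.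
rewrite big_cons /=.
apply: le_trans (measureU2 _ _ _) _.
- exact: measurable_itv.
- by apply: bigsetU_measurable => i _; exact: measurable_itv.
rewrite -[(size l).+1]addn1 natrD mulrDl mul1r EFinD addeC.
by apply: leeD => //; exact: Pr_cell.
Qed.
Lemma head_run (R : realType) (w : R) (s : seq nat) : (0 < size s)%N ->
  head 0 (run (fun _ : seq nat => w) s) = w.
Proof. by case: s. Qed.

Lemma size_cells I s : (size (cells I s) <= tt I (size s))%N.
Proof.
rewrite /cells; case: (ltnP (nth 0%N s 1) (size (codes I (size s)))) => h.
  have /mapP [x _ ->] := mem_nth [::] h.
  by rewrite size_map size_tuple.
by rewrite nth_default.
Qed.

Lemma OPT_ge0 (R : realType) (P : online_min_problem R) s : (0 <= OPT P s)%E.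
Proof. by apply/ereal_infP => y [z _ <-]; exact: cost_ge0. Qed.

Lemma rand_ok R I : rand_competitive (Prob R I) (Pr R) (fun w _ => w) 1.
Proof.
have E s : is_inp I s -> (fun w => cost (Prob R I) s (run (fun _ => w) s)) =
   (fun w => ((tt I (size s))%:R * \1_(bad I s) w)%:E).
  move=> [c [_ [s2 _]]]; apply/funext => w /=.
  by rewrite /pcost head_run // (leq_trans _ s2).
split.
  move=> s Hs; rewrite (E s Hs).
  apply/measurable_EFinP; apply: measurable_funM; first exact: measurable_cst.
  apply: measurable_indic; exact: meas_bad.
exists 1 => s Hs; rewrite (E s Hs).
under eq_integral do rewrite EFinM.
rewrite ge0_integralZl //. all: try (apply/measurable_EFinP; apply: measurable_indic; exact: meas_bad).
rewrite integral_indic //; last exact: meas_bad.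
rewrite setIT mul1e.
apply: (@le_trans _ _ 1%:E); last by rewrite addeC leeDl // OPT_ge0.
set t := tt I (size s).
case t0 : t => [|t'].
  by rewrite mul0e.
have N0 : (0 < NN I (size s))%N by rewrite /NN -/t t0.
apply: (@le_trans _ _ (t%:R%:E * ((size (cells I s))%:R / (NN I (size s))%:R)%:E)%E).
  rewrite -t0; apply: lee_wpmul2l; first by rewrite lee_fin.
  rewrite /bad; apply: le_trans (measureU2 _ _ _) _.
  - by apply: measurableC; exact: measurable_itv.
  - by apply: bigsetU_measurable => i _; exact: measurable_itv.
  rewrite -[X in (_ <= X)%E]add0e; apply: leeD; last exact: (Pr_big R).
  by rewrite le_eqVlt; apply/orP; left; apply/eqP; exact: (Pr_out R).
rewrite -EFinM lee_fin /NN -/t.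
have tp : (0 < t%:R :> R) by rewrite ltr0n t0.
rewrite natrX expr2 mulrA ler_pdivrMr ?mulr_gt0 // mul1r mulrC ler_pM2r //.
by rewrite ler_nat size_cells.
Qed.
Definition cellof {R : realType} (N : nat) (x : R) : nat :=
  minn (Num.Def.trunc (x * N%:R)) N.-1.

Lemma cellof_lt (R : realType) N (x : R) : (0 < N)%N -> (cellof N x < N)%N.
Proof. by move=> N0; rewrite /cellof (leq_ltn_trans (geq_minr _ _)) // prednK. Qed.

Lemma cell_cover (R : realType) N (x : R) : (0 < N)%N -> 0 <= x <= 1 ->
  cellset N (cellof N x) x.
Proof.
move=> N0 /andP [x0 x1]; rewrite /cellset /= in_itv /=.
have Np : (0 < N%:R :> R) by rewrite ltr0n.
set k := Num.Def.trunc (x * N%:R).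
have /andP [k1 k2] := truncn_itv (mulr_ge0 x0 (ltW Np)).
rewrite ler_pdivrMr // ler_pdivlMr //.
rewrite /cellof -/k; case: (leqP k N.-1) => h.
  by rewrite k1 /= ltW.
rewrite prednK //.
apply/andP; split.
  apply: le_trans k1; rewrite ler_nat; exact: ltnW.
by rewrite -[X in _ <= X]mul1r ler_wpM2r // ltW.
Qed.

Lemma free_pt (R : realType) N j0 j : (j0 < N)%N -> j != j0 ->
  ~ cellset N j ((j0%:R + 2^-1) / N%:R : R).
Proof.
move=> jN ne; rewrite /cellset /= in_itv /=.
have Np : (0 < N%:R :> R) by rewrite (@ltr0n R) (leq_ltn_trans _ jN).
rewrite ler_pM2r ?invr_gt0 // ler_pM2r ?invr_gt0 //.
case: (ltngtP j j0) ne => // h _.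
  apply/negP; rewrite negb_and; apply/orP; right.
  rewrite -ltNge; have : (j.+1%:R <= j0%:R :> R) by rewrite ler_nat.
  lra.
apply/negP; rewrite negb_and; apply/orP; left.
rewrite -ltNge; have : (j0.+1%:R <= j%:R :> R) by rewrite ler_nat.
rewrite -addn1 natrD; lra.
Qed.

Lemma free_pt01 (R : realType) N j0 : (j0 < N)%N ->
  0 <= ((j0%:R + 2^-1) / N%:R : R) <= 1.
Proof.
move=> jN.
have Np : (0 < N%:R :> R) by rewrite (@ltr0n R) (leq_ltn_trans _ jN).
apply/andP; split.
  apply: divr_ge0; last exact: ltW.
  by apply: addr_ge0; rewrite ?invr_ge0 ler0n.
rewrite ler_pdivrMr // mul1r.
have : (j0.+1%:R <= N%:R :> R) by rewrite ler_nat.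
rewrite -addn1 natrD; lra.
Qed.

Lemma in_bigU (T : Type) (F : nat -> set T) l j x : j \in l -> F j x ->
  (\big[setU/set0]_(i <- l) F i) x.
Proof.
elim: l => // i l IH; rewrite in_cons big_cons => /orP [/eqP -> Fx | jl Fx].
  by left.
by right; apply: IH.
Qed.

Lemma notin_bigU (T : Type) (F : nat -> set T) l x :
  (forall j, j \in l -> ~ F j x) -> ~ (\big[setU/set0]_(i <- l) F i) x.
Proof.
elim: l => [|i l IH] H; first by rewrite big_nil.
rewrite big_cons => -[]; first by apply: H; rewrite mem_head.
by apply: IH => j jl; apply: H; rewrite in_cons jl orbT.
Qed.

Lemma mk_tuple N m (L : seq nat) : size L = m -> all (fun j => j < N)%N L ->
  exists tau : m.-tuple 'I_N, map val tau = L.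
Proof.
elim: L m => [|j L IH] m <-.
  by exists [tuple]. 
move=> /= /andP [jN aL].
have [tau Htau] := IH _ erefl aL.
by exists (cons_tuple (Ordinal jN) tau); rewrite /= Htau.
Qed.

Lemma free_cell N (L : seq nat) : (size L < N)%N -> exists2 j0, (j0 < N)%N & j0 \notin L.
Proof.
move=> h; case: (boolP (all (fun j => j \in L) (iota 0 N))) => [/allP H | ].
  by have := uniq_leq_size (iota_uniq 0 N) H; rewrite size_iota leqNgt h.
by rewrite -has_predC => /hasP [j]; rewrite mem_iota add0n /= => jN nj; exists j.
Qed.
Lemma ln_le_sub1 (R : realType) (x : R) : 0 < x -> ln x <= x - 1.
Proof.
move=> x0; have := @le_ln1Dx R (x - 1); rewrite (_ : 1 + (x - 1) = x); last lra. by apply; lra.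
Qed.

Lemma final_bound (R : realType) (m u B : nat) : (0 < u)%N ->
  (m < u ^ (2 * u))%N -> (u <= 2 ^ B)%N -> (1 <= B)%N ->
  (3^-1 : R) * ln (ln m%:R) <= B%:R.
Proof.
move=> u0 mu uB B1.
have B1r : (1 <= B%:R :> R) by rewrite ler1n.
case: (lerP (ln (m%:R : R)) 0) => lm.
  rewrite (ln0 lm) mulr0; lra.
have m0 : (0 < m%:R :> R).
  rewrite ltNge; apply/negP => h; move: lm; rewrite ln0 ?ltxx //.
have up : (0 < u%:R :> R) by rewrite ltr0n.
have l2 : ln (2 : R) <= 1 by have := @ln_le_sub1 R 2; lra.
have l2p : 0 <= ln (2 : R) by apply: ln_ge0; lra.
have h1 : ln (m%:R : R) <= 2%:R * u%:R * ln (u%:R : R).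
  have -> : 2%:R * u%:R * ln (u%:R : R) = ln ((u%:R : R) ^+ (2 * u)).
    by rewrite lnXn // -[RHS]mulr_natl natrM.
  have pu : 0 < (u%:R : R) ^+ (2 * u) by rewrite exprn_gt0.
  rewrite ler_ln ?posrE //.
  by rewrite -natrX ler_nat ltnW.
have h2 : ln (u%:R : R) <= u%:R - 1 by exact: ln_le_sub1.
have h3 : ln (u%:R : R) <= B%:R * ln 2.
  rewrite mulr_natl -lnXn; last lra.
  have p2 : 0 < (2 : R) ^+ B by rewrite exprn_gt0 //; lra.
  rewrite ler_ln ?posrE //.
  by rewrite -natrX ler_nat.
have h4 : ln (m%:R : R) <= 2 * u%:R ^+ 2.
  rewrite expr2; nra.
have h5 : ln (ln (m%:R : R)) <= ln 2 + 2%:R * ln (u%:R : R).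
  have pu2 : 0 < (u%:R : R) ^+ 2 by rewrite exprn_gt0.
  have p22 : 0 < 2 * (u%:R : R) ^+ 2 by rewrite mulr_gt0 //; lra.
  have -> : ln 2 + 2%:R * ln (u%:R : R) = ln (2 * (u%:R : R) ^+ 2).
    have two2 : (0 : R) < 2 by lra.
    by rewrite lnM ?posrE // lnXn // mulr_natl.
  by rewrite ler_ln ?posrE.
have : ln 2 * (1 + 2 * B%:R) <= 1 + 2 * B%:R :> R.
  rewrite -[X in _ <= X]mul1r ler_wpM2r //; lra.
nra.
Qed.

Lemma key_lemma (R : realType) (I : nat -> nat) (c alpha : R)
  (A : tape -> seq nat -> R) (reads : tape -> seq nat -> nat) (b : nat -> nat) n :
  advice_alg_wf A reads ->
  (forall s, is_inp I s -> exists phi : tape,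
      (pcost I s (run (A phi) s) <= c%:E * OPT (Prob R I) s + alpha%:E)%E /\
      (forall n, (size s <= n)%N -> (reads phi s <= b n)%N)) ->
  (1 <= I n)%N -> (2 <= n)%N -> (2 <= tt I n)%N -> alpha < (tt I n)%:R ->
  (tt I n < 2 ^ b n)%N.
Proof.
move=> [wf1 wf2] Hc I1 n2 t2 tA.
set t := tt I n in t2 tA *.
rewrite ltnNge; apply/negP => HB.
set B := b n in HB.
set N := NN I n.
have N0 : (0 < N)%N by rewrite /N /NN -/t expn_gt0 (leq_trans _ t2).
set X := [seq A (fun k => nth false (tval v) k) [:: 0%N] | v <- enum {: B.-tuple bool}].
have sX : size X = (2 ^ B)%N by rewrite size_map -cardE card_tuple card_bool.
set L := [seq cellof N x | x <- X] ++ nseq (t - 2 ^ B) 0%N.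
have sL : size L = t by rewrite size_cat size_map sX size_nseq subnKC.
have aL : all (fun j => j < N)%N L.
  rewrite all_cat; apply/andP; split.
    by apply/allP => j /mapP [x _ ->]; exact: cellof_lt.
  by apply/allP => j /nseqP [-> _].
have [tau Htau] := @mk_tuple N t L sL aL.
set cc := index tau (enum {: t.-tuple 'I_N}).
have ccI : (cc < I n)%N.
  have : (cc < size (enum {: t.-tuple 'I_N}))%N by rewrite index_mem mem_enum.
  rewrite -cardE card_tuple card_ord /N /NN -/t -expnM => h.
  exact: leq_trans h (@tt_ok I n I1).
set s := 0%N :: cc :: nseq (n - 2) 0%N.
have ss : size s = n by rewrite /= size_nseq -addn2 subnK.
have Hs : is_inp I s.
  by exists cc; rewrite ss; split => //; split.
have cellsE : cells I s = L.
  rewrite /cells ss /= /codes.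
  rewrite (nth_map tau); last by rewrite index_mem mem_enum.
  by rewrite nth_index ?mem_enum.
have [phi [Hcost Hreads]] := Hc s Hs.
have rB : (reads phi s <= B)%N by apply: Hreads; rewrite ss.
have hx : head 0 (run (A phi) s) = A phi [:: 0%N] by [].
have xX : A phi [:: 0%N] \in X.
  pose v := [tuple phi i | i < B].
  have Hag : forall k, (k < reads phi [:: 0%N])%N -> phi k = nth false (tval v) k.
    move=> k kr.
    have kB : (k < B)%N.
      apply: leq_trans kr (leq_trans _ rB).
      exact: (wf1 phi s 1).
    by rewrite -[k]/(nat_of_ord (Ordinal kB)) nth_mktuple.
  have [_ <-] := wf2 phi (fun k => nth false (tval v) k) [:: 0%N] Hag.
  by apply: map_f; exact: mem_enum.
set x := A phi [:: 0%N] in hx xX.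
have xbad : bad I s x.
  rewrite /bad cellsE ss -/N.
  have [x01|x01] := boolP (0 <= x <= 1).
    right; apply: (@in_bigU _ _ _ (cellof N x)).
      by rewrite mem_cat map_f.
    exact: cell_cover.
  by left; rewrite /= in_itv /= (negbTE x01).
have costE : pcost I s (run (A phi) s) = (t%:R)%:E.
  by rewrite /pcost hx indicE mem_set // mulr1 ss.
have [j0 j0N j0L] : exists2 j0, (j0 < N)%N & j0 \notin L.
  apply: free_cell; rewrite sL /N /NN -/t.
  by rewrite -[X in (X < _)%N]muln1 expnS expn1 ltn_mul2l (leq_trans _ t2).
set z : R := (j0%:R + 2^-1) / N%:R.
have zgood : ~ bad I s z.
  rewrite /bad cellsE ss -/N => -[].
    by apply; rewrite /= in_itv /=; exact: free_pt01.
  apply: notin_bigU => j jL; apply: free_pt => //.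
  by apply/eqP => E; move: j0L; rewrite -E jL.
have OPT0 : OPT (Prob R I) s = 0%E.
  apply/eqP; rewrite eq_le OPT_ge0 andbT.
  apply: ge_ereal_inf; exists (pcost I s (nseq n z)).
    by exists (nseq n z) => //; rewrite /= !size_nseq -addn2 subnK.
  have hz : head 0 (nseq n z) = z by case: (n) n2.
  by rewrite /pcost hz indicE memNset // mulr0.
move: Hcost; rewrite costE OPT0 mule0 add0e lee_fin; lra.
Qed.

Theorem theorem18 (R : realType) (I : nat -> nat)
    (I_incr : forall n, (I n < I n.+1)%N) :
  exists P : online_min_problem R,
    at_most_inputs P I /\
    (exists (d : measure_display) (T : measurableType d) (Pr : probability T R)
            (Ra : T -> det_alg (req P) (ans P)),
        rand_competitive P Pr Ra 1) /\
    (forall (c : R) (A : tape -> seq (req P) -> ans P)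
            (reads : tape -> seq (req P) -> nat) (b : nat -> nat),
        advice_alg_wf A reads ->
        advice_competitive P A reads c b ->
        exists (kappa : R) (n0 : nat), 0 < kappa /\
          forall n, (n0 <= n)%N ->
            kappa * ln (ln ((I n)%:R)) <= (b n)%:R).
Proof.
exists (Prob R I); split; first exact: amI.
split.
  by exists _, _, (Pr R), (fun w _ => w); exact: rand_ok.
move=> c A reads b wf [alpha Hc].
have In : forall n, (n <= I n)%N.
  by elim=> // n IH; exact: (leq_ltn_trans IH (I_incr n)).
set K := maxn 2 (Num.Def.trunc alpha).+1.
have KA : alpha < K%:R.
  apply: lt_le_trans (truncnS_gt alpha) _.
  by rewrite ler_nat leq_maxr.
exists 3^-1, (maxn 2 (K ^ (2 * K))); split; first by rewrite invr_gt0; lra.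
move=> n; rewrite geq_max => /andP [n2 nK].
have tK : (K <= tt I n)%N by apply: tt_max; exact: leq_trans nK (In n).
have t2 : (2 <= tt I n)%N by apply: leq_trans tK; rewrite leq_maxl.
have tA : alpha < (tt I n)%:R by apply: lt_le_trans KA _; rewrite ler_nat.
have I1 : (1 <= I n)%N by apply: leq_trans (In n); exact: leq_trans n2.
have key := @key_lemma R I c alpha A reads b n wf Hc I1 n2 t2 tA.
apply: (@final_bound R (I n) (tt I n).+1 (b n)) => //.
- exact: tt_gt.
- case: (b n) key => //.
  by rewrite expn0 ltnS leqn0 => /eqP t0; move: t2; rewrite t0.
Qed.
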